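(* Let $F:\mathbb{R}\to\mathbb{R}$ be a Darboux function. Then there is a continuous function $g:\mathbb{R}\to\mathbb{R}$ which is not constant such that $F+g$ is a Darboux function.
   Context: A function $F:\mathbb{R}\to\mathbb{R}$ is Darboux if it maps every connected set to a connected set; equivalently, the image under $F$ of every interval is an interval. *)

(* Defs.v *)
From Stdlib Require Import Reals.
Open Scope R_scope.

Definition is_interval (S : R -> Prop) : Prop :=
  forall x y z : R, S x -> S y -> x <= z <= y -> S z.

Definition image (F : R -> R) (S : R -> Prop) : R -> Prop :=
  fun y => exists x, S x /\ F x = y.

Definition Darboux (F : R -> R) : Prop :=
  forall I : R -> Prop, is_interval I -> is_interval (image F I).

(* Main.v *)
Require Import Defs.
From Stdlib Require Import Reals Lra Lia Classical ClassicalEpsilon List.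
Open Scope R_scope.

Definition IVP (f : R -> R) : Prop :=
  forall a b y, a < b -> (f a < y < f b \/ f b < y < f a) ->
    exists x, a <= x <= b /\ f x = y.

Lemma Darboux_IVP (f : R -> R) : Darboux f -> IVP f.
Proof.
  intros HD a b y Hab Hy.
  set (I := fun x => a <= x <= b).
  assert (HI : is_interval I) by (intros x1 x2 x3 H1 H2 H3; unfold I in *; lra).
  specialize (HD I HI).
  assert (Ha : image f I (f a)) by (exists a; unfold I; split; [lra|reflexivity]).
  assert (Hb : image f I (f b)) by (exists b; unfold I; split; [lra|reflexivity]).
  destruct Hy as [Hy|Hy].
  - destruct (HD (f a) (f b) y Ha Hb ltac:(lra)) as [x [Hx1 Hx2]].
    exists x; unfold I in Hx1; auto.
  - destruct (HD (f b) (f a) y Hb Ha ltac:(lra)) as [x [Hx1 Hx2]].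
    exists x; unfold I in Hx1; auto.
Qed.

Lemma IVP_Darboux (f : R -> R) : IVP f -> Darboux f.
Proof.
  intros HV I HI y1 y2 z [x1 [Hx1 E1]] [x2 [Hx2 E2]] Hz.
  subst y1 y2.
  destruct (Req_dec z (f x1)) as [E|E]; [exists x1; auto|].
  destruct (Req_dec z (f x2)) as [E'|E']; [exists x2; auto|].
  destruct (Rtotal_order x1 x2) as [L|[L|L]].
  - destruct (HV x1 x2 z L ltac:(lra)) as [x [Hx Ex]].
    exists x; split; auto. apply (HI x1 x2 x); auto.
  - subst; lra.
  - destruct (HV x2 x1 z L ltac:(lra)) as [x [Hx Ex]].
    exists x; split; auto. apply (HI x2 x1 x); auto.
Qed.

Lemma IVP_atan (f : R -> R) : IVP f -> IVP (fun x => atan (f x)).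
Proof.
  intros HV a b y Hab Hy.
  assert (Hb1 := atan_bound (f a)). assert (Hb2 := atan_bound (f b)).
  assert (Hyr : - PI / 2 < y < PI / 2) by lra.
  assert (Hmono : forall u v, - PI/2 < u -> u < v -> v < PI/2 -> tan u < tan v)
    by (intros; apply tan_increasing; lra).
  destruct (HV a b (tan y) Hab) as [x [Hx Ex]].
  - destruct Hy as [Hy|Hy].
    + left. rewrite <- (tan_atan (f a)), <- (tan_atan (f b)). split; apply Hmono; lra.
    + right. rewrite <- (tan_atan (f a)), <- (tan_atan (f b)). split; apply Hmono; lra.
  - exists x; split; auto. rewrite Ex. apply atan_tan. lra.
Qed.

Lemma IVP_opp (f : R -> R) : IVP f -> IVP (fun x => - f x).
Proof.
  intros HV a b y Hab Hy.
  destruct (HV a b (-y) Hab ltac:(lra)) as [x [Hx Ex]].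
  exists x; split; auto; lra.
Qed.

Lemma tan_cont (y : R) : - PI / 2 < y < PI / 2 ->
  forall e, e > 0 -> exists d, d > 0 /\ forall u, Rabs (u - y) < d -> Rabs (tan u - tan y) < e.
Proof.
  intros Hy e He.
  assert (Hc := derivable_continuous_pt tan y (derivable_pt_tan y Hy)).
  destruct (Hc e He) as [d [Hd Hd2]].
  exists d; split; auto. intros u Hu.
  destruct (Req_dec u y) as [E|E].
  - subst. rewrite Rminus_diag, Rabs_R0. lra.
  - apply (Hd2 u). split; [split; [exact I| auto]|]. exact Hu.
Qed.

Lemma cont_of (g : R -> R) (x : R) :
  (forall e, e > 0 -> exists d, d > 0 /\ forall z, Rabs (z - x) < d -> Rabs (g z - g x) < e) ->
  continuity_pt g x.
Proof.
  intros H e He. destruct (H e He) as [d [Hd Hd2]].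
  exists d; split; auto. intros z [_ Hz]. apply Hd2. exact Hz.
Qed.

Lemma pow2_ge (n : nat) : INR n <= 2 ^ n.
Proof.
  induction n. simpl; lra.
  rewrite S_INR. simpl. assert (1 <= 2 ^ n) by (apply pow_R1_Rle; lra). lra.
Qed.

Lemma pow2_small (e : R) : e > 0 -> exists n, / 2 ^ n < e.
Proof.
  intros He. destruct (INR_archimed e 1 He) as [n Hn].
  exists n. assert (Hp := pow2_ge n). assert (Hpos : 0 < 2 ^ n) by (apply pow_lt; lra).
  apply (Rmult_lt_reg_l (2 ^ n)); auto. rewrite Rinv_r by lra. nra.
Qed.

Lemma pow2_pos (n : nat) : 0 < / 2 ^ n.
Proof. apply Rinv_0_lt_compat, pow_lt; lra. Qed.

Lemma pow2_S (n : nat) : / 2 ^ S n = / 2 ^ n / 2.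
Proof. simpl. rewrite Rinv_mult. unfold Rdiv. ring. Qed.

Lemma pow2_mono (n m : nat) : (n <= m)%nat -> / 2 ^ m <= / 2 ^ n.
Proof.
  intros H. induction H. lra. rewrite pow2_S. assert (Hp := pow2_pos m). lra.
Qed.

Definition closedC (C : R -> Prop) : Prop :=
  forall x, ~ C x -> exists d, d > 0 /\ forall z, Rabs (z - x) < d -> ~ C z.

Definition gapIVP (H : R -> R) (C : R -> Prop) : Prop :=
  forall u v y, u < v -> (forall z, u < z < v -> ~ C z) ->
    (H u < y < H v \/ H v < y < H u) -> exists x, u <= x <= v /\ H x = y.

(* sup of the C-points in [t,z] *)
Lemma last_C (C : R -> Prop) (t z : R) : closedC C -> C t -> t < z -> ~ C z ->
  exists e, t <= e < z /\ C e /\ forall w, e < w < z -> ~ C w.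
Proof.
  intros Hcl Ct Htz Cz.
  set (E := fun w => t <= w <= z /\ C w).
  assert (Hb : bound E) by (exists z; intros w [Hw _]; lra).
  assert (Hne : exists w, E w) by (exists t; split; [lra|auto]).
  destruct (completeness E Hb Hne) as [e [He1 He2]].
  assert (Hte : t <= e) by (apply He1; split; [lra|auto]).
  assert (Hez : e <= z) by (apply He2; intros w [Hw _]; lra).
  assert (Ce : C e).
  { apply NNPP; intro Ce. destruct (Hcl e Ce) as [d [Hd Hd2]].
    destruct (Req_dec e t) as [Et|Et]; [subst; contradiction|].
    assert (Hub : is_upper_bound E (e - d/2)).
    { intros w Ew. destruct (Rle_lt_dec w (e - d/2)) as [L|L]; auto.
      exfalso. destruct Ew as [Hw Cw]. assert (w <= e) by (apply He1; split; auto).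
      apply (Hd2 w); auto. apply Rabs_def1; lra. }
    specialize (He2 _ Hub). lra. }
  exists e. split; [split; auto|split; auto].
  - destruct (Req_dec e z) as [E1|E1]; [subst; contradiction|lra].
  - intros w Hw Cw. assert (w <= e) by (apply He1; split; [lra|auto]). lra.
Qed.

Lemma lemB_half (H : R -> R) (C : R -> Prop) :
  closedC C -> gapIVP H C ->
  (forall x, C x -> forall e, e > 0 -> exists d, d > 0 /\
      forall z, C z -> Rabs (z - x) < d -> Rabs (H z - H x) < e) ->
  forall a b y, a < b -> H a < y < H b -> exists x, a <= x <= b /\ H x = y.
Proof.
  intros Hcl HG HC a b y Hab Hy.
  apply NNPP; intro Hno.
  assert (Hne : forall x, a <= x <= b -> H x <> y) by (intros x Hx E; apply Hno; exists x; auto).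
  clear Hno.
  set (S := fun x => a <= x <= b /\ forall z, a <= z <= x -> H z < y).
  assert (Hb : bound S) by (exists b; intros w [Hw _]; lra).
  assert (HSa : S a).
  { split; [lra|]. intros z Hz. replace z with a by lra. lra. }
  destruct (completeness S Hb (ex_intro _ a HSa)) as [t [Ht1 Ht2]].
  assert (Hat : a <= t) by (apply Ht1; auto).
  assert (Htb : t <= b) by (apply Ht2; intros w [Hw _]; lra).
  assert (F1 : forall z, a <= z < t -> H z < y).
  { intros z Hz. apply NNPP; intro Hz2.
    assert (Hub : is_upper_bound S z).
    { intros s [Hs Hs2]. destruct (Rle_lt_dec s z) as [L|L]; auto.
      exfalso. apply Hz2. apply Hs2. lra. }
    specialize (Ht2 _ Hub). lra. }
  destruct (Rtotal_order (H t) y) as [Lt|[Eq|Gt]].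
  -
    assert (Htb' : t < b) by (destruct (Req_dec t b); [subst; lra|lra]).
    assert (F2 : forall e, e > 0 -> exists z, t < z < t + e /\ z <= b /\ H z > y).
    { intros e He. apply NNPP; intro Hn.
      set (s := Rmin (t + e/2) b).
      assert (Hs : S s).
      { unfold s; split; [unfold Rmin; destruct Rle_dec; lra|].
        intros z Hz. destruct (Rlt_le_dec z t) as [L|L]; [apply F1; lra|].
        destruct (Req_dec z t) as [E|E]; [subst; lra|].
        assert (Hz' : t < z < t + e /\ z <= b) by (unfold Rmin in Hz; destruct Rle_dec; lra).
        destruct (Rtotal_order (H z) y) as [L2|[L2|L2]]; auto.
        - exfalso. apply (Hne z); auto. lra.
        - exfalso. apply Hn. exists z. split; [lra|]. split; [lra|auto]. }
      specialize (Ht1 _ Hs). unfold s in Ht1. unfold Rmin in Ht1; destruct Rle_dec; lra. }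
    destruct (classic (C t)) as [Ct|Ct].
    + destruct (HC t Ct (y - H t) ltac:(lra)) as [d [Hd Hd2]].
      destruct (F2 d Hd) as [z [Hz1 [Hz2 Hz3]]].
      assert (Cz : ~ C z).
      { intro Cz. specialize (Hd2 z Cz). assert (Rabs (z - t) < d) by (apply Rabs_def1; lra).
        specialize (Hd2 H0). apply Rabs_def2 in Hd2. lra. }
      destruct (last_C C t z Hcl Ct ltac:(lra) Cz) as [e [He1 [Ce He2]]].
      assert (Hee : Rabs (H e - H t) < y - H t) by (apply Hd2; auto; apply Rabs_def1; lra).
      apply Rabs_def2 in Hee.
      destruct (HG e z y ltac:(lra) He2 ltac:(lra)) as [x [Hx Ex]].
      apply (Hne x); auto; lra.
    + destruct (Hcl t Ct) as [d [Hd Hd2]].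
      destruct (F2 d Hd) as [z [Hz1 [Hz2 Hz3]]].
      destruct (HG t z y ltac:(lra)) as [x [Hx Ex]].
      * intros w Hw. apply Hd2. apply Rabs_def1; lra.
      * lra.
      * apply (Hne x); auto; lra.
  - apply (Hne t); auto.
  -
    assert (Hat' : a < t) by (destruct (Req_dec a t); [subst; lra|lra]).
    assert (Key : forall d, d > 0 -> (forall z, Rabs (z - t) < d -> z < t -> ~ C z) -> False).
    { intros d Hd Hfree. set (w := Rmax a (t - d/2)).
      assert (Hw : a <= w < t) by (unfold w, Rmax; destruct Rle_dec; lra).
      destruct (HG w t y ltac:(lra)) as [x [Hx Ex]].
      - intros z Hz. apply Hfree; [|lra]. apply Rabs_def1; unfold w, Rmax in Hz; destruct Rle_dec; lra.
      - left. split; [apply F1; lra|lra].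
      - apply (Hne x); auto; lra. }
    destruct (classic (C t)) as [Ct|Ct].
    + destruct (HC t Ct (H t - y) ltac:(lra)) as [d [Hd Hd2]].
      apply (Key (Rmin d (t - a))). { unfold Rmin; destruct Rle_dec; lra. }
      intros z Hz Hzt Cz. assert (Hz' : Rabs (z - t) < d) by (unfold Rmin in Hz; destruct Rle_dec; lra).
      specialize (Hd2 z Cz Hz'). apply Rabs_def2 in Hd2.
      assert (a <= z) by (apply Rabs_def2 in Hz; unfold Rmin in Hz; destruct Rle_dec; lra).
      specialize (F1 z ltac:(lra)). lra.
    + destruct (Hcl t Ct) as [d [Hd Hd2]].
      apply (Key d Hd). intros z Hz _. apply Hd2; auto.
Qed.

Lemma lemB (H : R -> R) (C : R -> Prop) :
  closedC C -> gapIVP H C ->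
  (forall x, C x -> forall e, e > 0 -> exists d, d > 0 /\
      forall z, C z -> Rabs (z - x) < d -> Rabs (H z - H x) < e) ->
  IVP H.
Proof.
  intros Hcl HG HC a b y Hab [Hy|Hy].
  - apply (lemB_half H C); auto.
  - destruct (lemB_half (fun x => - H x) C Hcl) with (a := a) (b := b) (y := - y) as [x [Hx Ex]]; auto.
    + intros u v y' Huv Hf Hy'. destruct (HG u v (- y') Huv Hf) as [x [Hx Ex]]; [lra|].
      exists x; split; auto; lra.
    + intros x Cx e He. destruct (HC x Cx e He) as [d [Hd Hd2]]. exists d; split; auto.
      intros z Cz Hz. specialize (Hd2 z Cz Hz). rewrite <- Rabs_Ropp. replace (- (- H z - - H x)) with (H z - H x) by ring. auto.
    + lra.
    + exists x; split; auto; lra.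
Qed.

Definition free (C : R -> Prop) (u v : R) := forall z, u < z < v -> ~ C z.

Definition core_low (H : R -> R) (C : R -> Prop) (z1 rho : R) :=
  forall x u v, C x -> x - rho <= u -> u < v -> v <= x + rho -> free C u v ->
    exists s, u < s < v /\ H s < z1.
Definition core_high (H : R -> R) (C : R -> Prop) (z2 rho : R) :=
  forall x u v, C x -> x - rho <= u -> u < v -> v <= x + rho -> free C u v ->
    exists s, u < s < v /\ H s > z2.

Definition PL_top (H : R -> R) (C : R -> Prop) := forall x e, C x -> e > 0 ->
  (exists d, d > 0 /\ free C (x - d) x) \/ (exists s, x - e < s < x /\ ~ C s /\ H s > H x - e).
Definition PL_bot (H : R -> R) (C : R -> Prop) := forall x e, C x -> e > 0 ->
  (exists d, d > 0 /\ free C (x - d) x) \/ (exists s, x - e < s < x /\ ~ C s /\ H s < H x + e).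
Definition PR_top (H : R -> R) (C : R -> Prop) := forall x e, C x -> e > 0 ->
  (exists d, d > 0 /\ free C x (x + d)) \/ (exists s, x < s < x + e /\ ~ C s /\ H s > H x - e).
Definition PR_bot (H : R -> R) (C : R -> Prop) := forall x e, C x -> e > 0 ->
  (exists d, d > 0 /\ free C x (x + d)) \/ (exists s, x < s < x + e /\ ~ C s /\ H s < H x + e).

Lemma gap_sub (H : R -> R) (C : R -> Prop) u v s1 s2 y :
  gapIVP H C -> free C u v -> u <= s1 <= v -> u <= s2 <= v ->
  H s1 < y < H s2 -> exists x, u <= x <= v /\ H x = y.
Proof.
  intros HG Hf H1 H2 Hy.
  destruct (Rtotal_order s1 s2) as [L|[L|L]].
  - destruct (HG s1 s2 y L) as [x [Hx Ex]]; [intros z Hz; apply Hf; lra|lra|].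
    exists x; split; [lra|auto].
  - subst; lra.
  - destruct (HG s2 s1 y L) as [x [Hx Ex]]; [intros z Hz; apply Hf; lra|lra|].
    exists x; split; [lra|auto].
Qed.

Lemma lemA_top (H : R -> R) (C : R -> Prop) (z1 rho : R) :
  closedC C -> gapIVP H C -> rho > 0 -> core_low H C z1 rho -> PL_top H C ->
  forall a b y, a < b -> H a < y < H b -> y > z1 -> exists x, a <= x <= b /\ H x = y.
Proof.
  intros Hcl HG Hrho Hcore HP a b y Hab Hy Hyz.
  apply NNPP; intro Hno.
  assert (Hne : forall x, a <= x <= b -> H x <> y) by (intros x Hx E; apply Hno; exists x; auto).
  clear Hno.
  destruct (classic (exists x0, a < x0 < b /\ C x0)) as [[x0 [Hx0 Cx0]]|Hnx].
  2:{ destruct (HG a b y Hab) as [x [Hx Ex]].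
      - intros z Hz Cz. apply Hnx. exists z; auto.
      - left; auto.
      - apply (Hne x); auto. }
  assert (Hb1 : exists b1, C b1 /\ a < b1 <= b /\ H b1 > y).
  { destruct (classic (C b)) as [Cb|Cb]; [exists b; split; [auto|split; lra]|].
    destruct (last_C C x0 b Hcl Cx0 ltac:(lra) Cb) as [e [He1 [Ce He2]]].
    exists e. split; auto. split; [lra|].
    destruct (Rtotal_order (H e) y) as [L|[L|L]]; auto.
    - destruct (HG e b y ltac:(lra) He2 ltac:(lra)) as [x [Hx Ex]]. exfalso; apply (Hne x); auto; lra.
    - exfalso; apply (Hne e); auto; lra. }
  destruct Hb1 as [b1 [Cb1 [Hb1 Hyb1]]].
  set (eps := Rmin (Rmin (H b1 - y) (b1 - a)) rho / 2).
  assert (Heps : eps > 0) by (unfold eps, Rmin; repeat destruct Rle_dec; lra).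
  assert (Heps1 : eps < H b1 - y) by (unfold eps, Rmin; repeat destruct Rle_dec; lra).
  assert (Heps2 : eps < b1 - a) by (unfold eps, Rmin; repeat destruct Rle_dec; lra).
  assert (Heps3 : eps < rho) by (unfold eps, Rmin; repeat destruct Rle_dec; lra).
  destruct (HP b1 eps Cb1 Heps) as [[d [Hd Hfree]]|[s [Hs1 [Cs Hs2]]]].
  - set (u := Rmax a (Rmax (b1 - d) (b1 - rho))).
    assert (Hu : a <= u < b1 /\ b1 - d <= u /\ b1 - rho <= u) by (unfold u, Rmax; repeat destruct Rle_dec; lra).
    assert (Hfu : free C u b1) by (intros z Hz; apply Hfree; lra).
    destruct (Hcore b1 u b1 Cb1 ltac:(lra) ltac:(lra) ltac:(lra) Hfu) as [s1 [Hs1 Hs1']].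
    destruct (gap_sub H C u b1 s1 b1 y HG Hfu ltac:(lra) ltac:(lra) ltac:(lra)) as [x [Hx Ex]].
    apply (Hne x); auto; lra.
  - destruct (Hcl s Cs) as [d [Hd Hd2]].
    set (u := Rmax (Rmax a (b1 - rho)) (s - d/2)).
    set (v := Rmin b1 (s + d/2)).
    assert (Hu : a <= u < s /\ b1 - rho <= u /\ s - d/2 <= u) by (unfold u, Rmax; repeat destruct Rle_dec; lra).
    assert (Hv : s < v <= b1 /\ v <= s + d/2) by (unfold v, Rmin; repeat destruct Rle_dec; lra).
    assert (Hfu : free C u v) by (intros z Hz; apply Hd2; apply Rabs_def1; lra).
    destruct (Hcore b1 u v Cb1 ltac:(lra) ltac:(lra) ltac:(lra) Hfu) as [s1 [Hs1' Hs1'']].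
    destruct (gap_sub H C u v s1 s y HG Hfu ltac:(lra) ltac:(lra) ltac:(lra)) as [x [Hx Ex]].
    apply (Hne x); auto; lra.
Qed.

Lemma closed_refl (C : R -> Prop) : closedC C -> closedC (fun x => C (- x)).
Proof.
  intros Hc x Cx. destruct (Hc (- x) Cx) as [d [Hd Hd2]]. exists d; split; auto.
  intros z Hz. apply Hd2. replace (- z - - x) with (- (z - x)) by ring. rewrite Rabs_Ropp; auto.
Qed.

Lemma gap_refl (H : R -> R) (C : R -> Prop) : gapIVP H C -> gapIVP (fun x => H (- x)) (fun x => C (- x)).
Proof.
  intros HG u v y Huv Hf Hy.
  destruct (HG (- v) (- u) y ltac:(lra)) as [x [Hx Ex]].
  - intros z Hz Cz. apply (Hf (- z)); [lra|]. rewrite Ropp_involutive; auto.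
  - lra.
  - exists (- x). split; [lra|]. rewrite Ropp_involutive; auto.
Qed.

Lemma gap_opp (H : R -> R) (C : R -> Prop) : gapIVP H C -> gapIVP (fun x => - H x) C.
Proof.
  intros HG u v y Huv Hf Hy.
  destruct (HG u v (- y) Huv Hf ltac:(lra)) as [x [Hx Ex]]. exists x; split; auto; lra.
Qed.

Lemma free_refl (C : R -> Prop) u v : free C u v -> free (fun x => C (- x)) (- v) (- u).
Proof. intros Hf z Hz Cz. apply (Hf (- z)); [lra|auto]. Qed.

Lemma core_low_refl H C w rho : core_low H C w rho -> core_low (fun x => H (- x)) (fun x => C (- x)) w rho.
Proof.
  intros Hc x u v Cx Hu Huv Hv Hf.
  destruct (Hc (- x) (- v) (- u) Cx ltac:(lra) ltac:(lra) ltac:(lra)) as [s [Hs Hs2]].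
  - intros z Hz Cz. apply (Hf (- z)); [lra|]. rewrite Ropp_involutive; auto.
  - exists (- s). split; [lra|]. rewrite Ropp_involutive; auto.
Qed.

Lemma core_high_refl H C w rho : core_high H C w rho -> core_high (fun x => H (- x)) (fun x => C (- x)) w rho.
Proof.
  intros Hc x u v Cx Hu Huv Hv Hf.
  destruct (Hc (- x) (- v) (- u) Cx ltac:(lra) ltac:(lra) ltac:(lra)) as [s [Hs Hs2]].
  - intros z Hz Cz. apply (Hf (- z)); [lra|]. rewrite Ropp_involutive; auto.
  - exists (- s). split; [lra|]. rewrite Ropp_involutive; auto.
Qed.

Lemma core_high_opp H C w rho : core_high H C w rho -> core_low (fun x => - H x) C (- w) rho.
Proof.
  intros Hc x u v Cx Hu Huv Hv Hf.
  destruct (Hc x u v Cx Hu Huv Hv Hf) as [s [Hs Hs2]]. exists s; split; auto; lra.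
Qed.

Lemma PR_top_refl H C : PR_top H C -> PL_top (fun x => H (- x)) (fun x => C (- x)).
Proof.
  intros HP x e Cx He. destruct (HP (- x) e Cx He) as [[d [Hd Hf]]|[s [Hs [Cs Hs2]]]].
  - left. exists d; split; auto. intros z Hz Cz. apply (Hf (- z)); [lra|auto].
  - right. exists (- s). rewrite Ropp_involutive. split; [lra|split; auto].
Qed.

Lemma PL_bot_opp H C : PL_bot H C -> PL_top (fun x => - H x) C.
Proof.
  intros HP x e Cx He. destruct (HP x e Cx He) as [[d [Hd Hf]]|[s [Hs [Cs Hs2]]]].
  - left. exists d; split; auto.
  - right. exists s. split; auto. split; auto. lra.
Qed.

Lemma PR_bot_refl_opp H C : PR_bot H C -> PL_top (fun x => - H (- x)) (fun x => C (- x)).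
Proof.
  intros HP x e Cx He. destruct (HP (- x) e Cx He) as [[d [Hd Hf]]|[s [Hs [Cs Hs2]]]].
  - left. exists d; split; auto. intros z Hz Cz. apply (Hf (- z)); [lra|auto].
  - right. exists (- s). rewrite Ropp_involutive. split; [lra|split; auto]. lra.
Qed.

Lemma lemA (H : R -> R) (C : R -> Prop) (z1 z2 rho : R) :
  closedC C -> gapIVP H C -> z1 < z2 -> rho > 0 ->
  core_low H C z1 rho -> core_high H C z2 rho ->
  PL_top H C -> PL_bot H C -> PR_top H C -> PR_bot H C -> IVP H.
Proof.
  intros Hcl HG Hz Hrho Hlo Hhi HLt HLb HRt HRb a b y Hab [Hy|Hy].
  - destruct (Rlt_le_dec z1 y) as [Y|Y].
    + apply (lemA_top H C z1 rho); auto.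
    + destruct (lemA_top (fun x => - H (- x)) (fun x => C (- x)) (- z2) rho) with (a := - b) (b := - a) (y := - y)
        as [x [Hx Ex]].
      * apply closed_refl; auto.
      * apply gap_opp, gap_refl; auto.
      * auto.
      * apply (core_high_opp (fun x => H (- x))). apply core_high_refl; auto.
      * apply PR_bot_refl_opp; auto.
      * lra.
      * rewrite !Ropp_involutive. lra.
      * lra.
      * exists (- x). split; [lra|]. lra.
  - destruct (Rlt_le_dec z1 y) as [Y|Y].
    + destruct (lemA_top (fun x => H (- x)) (fun x => C (- x)) z1 rho) with (a := - b) (b := - a) (y := y)
        as [x [Hx Ex]].
      * apply closed_refl; auto.
      * apply gap_refl; auto.
      * auto.
      * apply core_low_refl; auto.
      * apply PR_top_refl; auto.
      * lra.
      * rewrite !Ropp_involutive. lra.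
      * lra.
      * exists (- x). split; [lra|]. auto.
    + destruct (lemA_top (fun x => - H x) C (- z2) rho) with (a := a) (b := b) (y := - y)
        as [x [Hx Ex]]; auto.
      * apply gap_opp; auto.
      * apply core_high_opp; auto.
      * apply PL_bot_opp; auto.
      * lra.
      * lra.
      * exists x. split; auto. lra.
Qed.

Definition sp_ok (l r : R) (q : (R*R)*(R*R)) : Prop :=
  l <= fst (fst q) /\ fst (fst q) < snd (fst q) /\ snd (fst q) < fst (snd q) /\
  fst (snd q) < snd (snd q) /\ snd (snd q) <= r /\
  2 * (snd (fst q) - fst (fst q)) <= r - l /\ 2 * (snd (snd q) - fst (snd q)) <= r - l.

Definition ind (P : Prop) : R := if excluded_middle_informative P then 1 else 0.

Lemma ind_01 P : 0 <= ind P <= 1.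
Proof. unfold ind; destruct excluded_middle_informative; lra. Qed.

Lemma Rabs_le_inv (a b : R) : Rabs a <= b -> - b <= a <= b.
Proof. unfold Rabs; destruct Rcase_abs; lra. Qed.

Lemma lim_le (u : nat -> R) (l M : R) (N : nat) :
  Un_cv u l -> (forall n, (n >= N)%nat -> u n <= M) -> l <= M.
Proof.
  intros Hc Hb. apply Rnot_lt_le; intro L.
  destruct (Hc (l - M) ltac:(lra)) as [N' HN'].
  specialize (HN' (Nat.max N N') (Nat.le_max_r _ _)).
  specialize (Hb (Nat.max N N') (Nat.le_max_l _ _)).
  unfold Rdist in HN'. apply Rabs_def2 in HN'. lra.
Qed.

Lemma small_le (a b c : R) : 0 <= c -> (forall k, a <= b + c * / 2 ^ k) -> a <= b.
Proof.
  intros Hc H. apply Rnot_lt_le; intro L.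
  destruct (pow2_small ((a - b) / (c + 1))) as [k Hk].
  { apply Rdiv_lt_0_compat; lra. }
  specialize (H k). assert (Hp := pow2_pos k).
  assert (c * / 2 ^ k <= (c + 1) * / 2 ^ k) by (set (t := / 2 ^ k) in *; nra).
  assert ((c + 1) * / 2 ^ k < a - b).
  { apply (Rmult_lt_reg_r (/ (c + 1))). apply Rinv_0_lt_compat; lra.
    replace ((c + 1) * / 2 ^ k * / (c + 1)) with (/ 2 ^ k) by (field; repeat split; try lra; apply pow_nonzero; lra).
    exact Hk. }
  lra.
Qed.

Section Tree.
Variables (l0 r0 : R) (sp : nat -> R -> R -> (R*R)*(R*R)).
Hypothesis Hl0 : l0 < r0.
Hypothesis Hsp : forall n l r, l < r -> sp_ok l r (sp n l r).

Definition child (n : nat) (b : bool) (J : R*R) : R*R :=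
  if b then snd (sp n (fst J) (snd J)) else fst (sp n (fst J) (snd J)).

Fixpoint node (p : list bool) : R*R :=
  match p with nil => (l0, r0) | b :: q => child (length q) b (node q) end.

Definition inn (x : R) (J : R*R) := fst J <= x <= snd J.

Definition Cset (x : R) := forall n, exists p, length p = n /\ inn x (node p).

Lemma node_lt p : fst (node p) < snd (node p).
Proof.
  induction p as [|b q IH]; simpl; auto.
  destruct (Hsp (length q) _ _ IH) as (H1&H2&H3&H4&H5&H6&H7).
  unfold child; destruct b; auto.
Qed.

Lemma node_cases p : let J := node p in let q := sp (length p) (fst J) (snd J) in
  node (false :: p) = fst q /\ node (true :: p) = snd q /\ sp_ok (fst J) (snd J) q.
Proof. simpl. split; [reflexivity|split; [reflexivity|]]. apply Hsp, node_lt. Qed.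

Lemma child_bounds p b : fst (node p) <= fst (node (b :: p)) /\ snd (node (b :: p)) <= snd (node p).
Proof.
  destruct (node_cases p) as (E1&E2&H1&H2&H3&H4&H5&H6&H7).
  destruct b; [rewrite E2|rewrite E1]; lra.
Qed.

Lemma child_sep p : snd (node (false :: p)) < fst (node (true :: p)).
Proof. destruct (node_cases p) as (E1&E2&H1&H2&H3&H4&H5&H6&H7). rewrite E1, E2; lra. Qed.

Lemma child_len p b : 2 * (snd (node (b :: p)) - fst (node (b :: p))) <= snd (node p) - fst (node p).
Proof.
  destruct (node_cases p) as (E1&E2&H1&H2&H3&H4&H5&H6&H7).
  destruct b; [rewrite E2|rewrite E1]; lra.
Qed.

Lemma node_len p : snd (node p) - fst (node p) <= (r0 - l0) * / 2 ^ length p.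
Proof.
  induction p as [|b q IH].
  - simpl. lra.
  - assert (H := child_len q b). change (length (b :: q)) with (S (length q)).
    rewrite pow2_S. lra.
Qed.

Lemma inn_parent x p b : inn x (node (b :: p)) -> inn x (node p).
Proof. unfold inn; intros H. destruct (child_bounds p b). lra. Qed.

Lemma same_len_eq p : forall q x, length p = length q -> inn x (node p) -> inn x (node q) -> p = q.
Proof.
  induction p as [|b p IH]; intros q x Hl Hp Hq.
  - destruct q; [auto|simpl in Hl; discriminate].
  - destruct q as [|c q]; [simpl in Hl; discriminate|].
    simpl in Hl. injection Hl as Hl.
    assert (E := IH q x Hl (inn_parent _ _ _ Hp) (inn_parent _ _ _ Hq)). subst q.
    f_equal. assert (S := child_sep p). unfold inn in *.
    destruct b, c; auto; exfalso; lra.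
Qed.

Lemma C_step x p : Cset x -> inn x (node p) -> exists b, inn x (node (b :: p)).
Proof.
  intros Cx Hp. destruct (Cx (S (length p))) as [q [Hq Hin]].
  destruct q as [|c q]; [simpl in Hq; discriminate|].
  simpl in Hq. injection Hq as Hq.
  assert (E := same_len_eq q p x Hq (inn_parent _ _ _ Hin) Hp). subst q.
  exists c; auto.
Qed.

Lemma out_interval (a b x : R) : ~ (a <= x <= b) -> a <= b ->
  exists d, d > 0 /\ forall z, Rabs (z - x) < d -> ~ (a <= z <= b).
Proof.
  intros Hn Hab. destruct (Rlt_le_dec x a) as [L|L].
  - exists (a - x). split; [lra|]. intros z Hz. apply Rabs_def2 in Hz. lra.
  - assert (b < x) by lra. exists (x - b). split; [lra|]. intros z Hz. apply Rabs_def2 in Hz. lra.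
Qed.

Lemma near p : forall x, inn x (node p) -> exists d, d > 0 /\
  forall q z, length q = length p -> Rabs (z - x) < d -> inn z (node q) -> q = p.
Proof.
  induction p as [|b p IH]; intros x Hx.
  - exists 1. split; [lra|]. intros q z Hq _ _. destruct q; [auto|simpl in Hq; discriminate].
  - destruct (IH x (inn_parent _ _ _ Hx)) as [d0 [Hd0 Hd0']].
    assert (Hsib : ~ inn x (node (negb b :: p))).
    { assert (S := child_sep p). unfold inn in *. destruct b; cbn [negb]; lra. }
    destruct (out_interval _ _ _ Hsib (Rlt_le _ _ (node_lt _))) as [d1 [Hd1 Hd1']].
    exists (Rmin d0 d1). split; [unfold Rmin; destruct Rle_dec; lra|].
    intros q z Hq Hz Hin. destruct q as [|c q]; [simpl in Hq; discriminate|].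
    simpl in Hq. injection Hq as Hq.
    assert (E : q = p).
    { apply (Hd0' q z Hq); [unfold Rmin in Hz; destruct Rle_dec; lra|]. apply (inn_parent _ _ c); auto. }
    subst q. f_equal. destruct (Bool.bool_dec c b) as [E|E]; auto.
    exfalso. apply (Hd1' z); [unfold Rmin in Hz; destruct Rle_dec; lra|].
    replace (negb b) with c; auto. destruct b, c; simpl; auto; contradiction.
Qed.

Lemma ancestor p : forall n, (n <= length p)%nat -> exists q, length q = n /\
  forall x, inn x (node p) -> inn x (node q).
Proof.
  induction p as [|b p IH]; intros n Hn.
  - exists nil. simpl in Hn. split; [simpl; lia|auto].
  - simpl in Hn. destruct (Nat.eq_dec n (S (length p))) as [E|E].
    + exists (b :: p). split; [simpl; auto|auto].
    + destruct (IH n ltac:(lia)) as [q [Hq Hq']]. exists q. split; auto.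
      intros x Hx. apply Hq'. apply (inn_parent _ _ b); auto.
Qed.

Fixpoint Lk (k : nat) (p : list bool) : list bool :=
  match k with O => p | S k' => false :: Lk k' p end.

Lemma Lk_len k p : length (Lk k p) = (k + length p)%nat.
Proof. induction k; simpl; auto. Qed.

Lemma Lk_snd_mono p k j : (k <= j)%nat -> snd (node (Lk j p)) <= snd (node (Lk k p)).
Proof.
  intros H. induction H; [lra|]. simpl Lk. destruct (child_bounds (Lk m p) false). lra.
Qed.

Lemma nonempty p : exists x, inn x (node p) /\ Cset x.
Proof.
  set (u := fun k => fst (node (Lk k p))).
  assert (Hg : Un_growing u).
  { intros k. unfold u. simpl Lk. destruct (child_bounds (Lk k p) false). lra. }
  assert (Hub : has_ub u).
  { exists (snd (node p)). intros y [k Hk]. subst y. unfold u.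
    assert (H1 := Lk_snd_mono p 0 k ltac:(lia)). assert (H2 := node_lt (Lk k p)). simpl in H1. lra. }
  destruct (growing_cv u Hg Hub) as [xs Hxs].
  assert (Hin : forall k, inn xs (node (Lk k p))).
  { intros k. split.
    - apply (growing_ineq u xs Hg Hxs k).
    - apply (lim_le u xs _ k Hxs). intros n Hn. unfold u.
      assert (H1 := Lk_snd_mono p k n Hn). assert (H2 := node_lt (Lk n p)). lra. }
  exists xs. split; [apply (Hin 0%nat)|].
  intros n. destruct (Compare_dec.le_lt_dec (length p) n) as [L|L].
  - exists (Lk (n - length p) p). split; [rewrite Lk_len; lia|apply Hin].
  - destruct (ancestor p n ltac:(lia)) as [q [Hq Hq']]. exists q. split; auto. apply Hq', (Hin 0%nat).
Qed.

Lemma out_nbhd n : forall x, (forall p, length p = n -> ~ inn x (node p)) ->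
  exists d, d > 0 /\ forall z p, length p = n -> Rabs (z - x) < d -> ~ inn z (node p).
Proof.
  induction n as [|n IH]; intros x Hx.
  - assert (Hn : ~ inn x (node nil)) by (apply Hx; auto).
    destruct (out_interval _ _ _ Hn (Rlt_le _ _ (node_lt _))) as [d [Hd Hd']].
    exists d; split; auto. intros z p Hp Hz. destruct p; [apply Hd'; auto|simpl in Hp; discriminate].
  - destruct (classic (exists p', length p' = n /\ inn x (node p'))) as [[p' [Hp' Hin]]|Hno].
    + destruct (near p' x Hin) as [d1 [Hd1 Hd1']].
      assert (Hf : ~ inn x (node (false :: p'))) by (apply Hx; simpl; auto).
      assert (Ht : ~ inn x (node (true :: p'))) by (apply Hx; simpl; auto).
      destruct (out_interval _ _ _ Hf (Rlt_le _ _ (node_lt _))) as [d2 [Hd2 Hd2']].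
      destruct (out_interval _ _ _ Ht (Rlt_le _ _ (node_lt _))) as [d3 [Hd3 Hd3']].
      exists (Rmin d1 (Rmin d2 d3)). split; [unfold Rmin; repeat destruct Rle_dec; lra|].
      intros z p Hp Hz Hin'. destruct p as [|c q]; [simpl in Hp; discriminate|].
      simpl in Hp. injection Hp as Hp.
      assert (E : q = p').
      { apply (Hd1' q z); [lia| |apply (inn_parent _ _ c); auto].
        unfold Rmin in Hz; repeat destruct Rle_dec; lra. }
      subst q. destruct c.
      * apply (Hd3' z); auto. unfold Rmin in Hz; repeat destruct Rle_dec; lra.
      * apply (Hd2' z); auto. unfold Rmin in Hz; repeat destruct Rle_dec; lra.
    + destruct (IH x) as [d [Hd Hd']].
      { intros p Hp Hin. apply Hno. exists p; auto. }
      exists d; split; auto. intros z p Hp Hz Hin.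
      destruct p as [|c q]; [simpl in Hp; discriminate|]. simpl in Hp. injection Hp as Hp.
      apply (Hd' z q Hp Hz). apply (inn_parent _ _ c); auto.
Qed.

Lemma C_closed : closedC Cset.
Proof.
  intros x Cx.
  assert (Hn : exists n, forall p, length p = n -> ~ inn x (node p)).
  { apply NNPP; intro Hn. apply Cx. intros n. apply NNPP; intro Hn2. apply Hn. exists n.
    intros p Hp Hin. apply Hn2. exists p; auto. }
  destruct Hn as [n Hn]. destruct (out_nbhd n x Hn) as [d [Hd Hd']].
  exists d; split; auto. intros z Hz Cz. destruct (Cz n) as [p [Hp Hin]]. apply (Hd' z p Hp Hz Hin).
Qed.

Lemma gap_free p z : snd (node (false :: p)) < z < fst (node (true :: p)) -> ~ Cset z.
Proof.
  intros Hz Cz.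
  assert (Hin : inn z (node p)).
  { destruct (child_bounds p false). destruct (child_bounds p true).
    assert (N1 := node_lt (false :: p)). assert (N2 := node_lt (true :: p)). unfold inn; lra. }
  destruct (C_step z p Cz Hin) as [b Hb]. unfold inn in Hb. destruct b; lra.
Qed.

Lemma C_root x : Cset x -> l0 <= x <= r0.
Proof.
  intros Cx. destruct (Cx 0%nat) as [p [Hp Hin]]. destruct p; [|simpl in Hp; discriminate].
  exact Hin.
Qed.

(* the staircase approximations *)
Fixpoint ff (k : nat) (p : list bool) (x : R) : R :=
  match k with
  | O => if Rle_dec (snd (node p)) x then 1 else 0
  | S k' => (ff k' (false :: p) x + ff k' (true :: p) x) / 2
  end.

Lemma ff_01 k : forall p x, 0 <= ff k p x <= 1.
Proof.
  induction k; intros p x; simpl.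
  - destruct Rle_dec; lra.
  - specialize (IHk (false :: p) x) as H1. specialize (IHk (true :: p) x) as H2. lra.
Qed.

Lemma ff_left k : forall p x, x < fst (node p) -> ff k p x = 0.
Proof.
  induction k; intros p x Hx; simpl.
  - destruct Rle_dec; auto. assert (H := node_lt p). lra.
  - rewrite !IHk; [lra| |]; destruct (child_bounds p true), (child_bounds p false); lra.
Qed.

Lemma ff_right k : forall p x, snd (node p) <= x -> ff k p x = 1.
Proof.
  induction k; intros p x Hx; simpl.
  - destruct Rle_dec; auto. lra.
  - rewrite !IHk; [lra| |]; destruct (child_bounds p true), (child_bounds p false); lra.
Qed.

Lemma ff_grow_gen k : forall p x, ff k p x <= ff (S k) p x.
Proof.
  induction k; intros p x.
  - change (ff 1 p x) with ((ff 0 (false :: p) x + ff 0 (true :: p) x) / 2).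
    destruct (Rle_dec (snd (node p)) x) as [L|L].
    + rewrite (ff_right 0 p), (ff_right 0 (false :: p)), (ff_right 0 (true :: p)); auto; try lra;
      destruct (child_bounds p true), (child_bounds p false); lra.
    + simpl (ff 0 p x). destruct Rle_dec; [contradiction|].
      assert (H1 := ff_01 0 (false :: p) x). assert (H2 := ff_01 0 (true :: p) x). lra.
  - change (ff (S k) p x) with ((ff k (false :: p) x + ff k (true :: p) x) / 2).
    change (ff (S (S k)) p x) with ((ff (S k) (false :: p) x + ff (S k) (true :: p) x) / 2).
    specialize (IHk (false :: p) x) as H1. specialize (IHk (true :: p) x) as H2. lra.
Qed.

Lemma ff_step k : forall p x, ff (S k) p x <= ff k p x + / 2 ^ k.
Proof.
  induction k; intros p x.
  - assert (H1 := ff_01 1 p x). assert (H2 := ff_01 0 p x). simpl pow. lra.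
  - change (ff (S k) p x) with ((ff k (false :: p) x + ff k (true :: p) x) / 2).
    change (ff (S (S k)) p x) with ((ff (S k) (false :: p) x + ff (S k) (true :: p) x) / 2).
    rewrite pow2_S.
    specialize (IHk (false :: p) x) as H1. specialize (IHk (true :: p) x) as H2.
    assert (Hsep := child_sep p).
    destruct (Rlt_le_dec x (fst (node (true :: p)))) as [L|L].
    + rewrite (ff_left (S k) (true :: p)), (ff_left k (true :: p)); auto. lra.
    + rewrite (ff_right (S k) (false :: p)), (ff_right k (false :: p)); lra.
Qed.

Lemma ff_mono k : forall p x y, x <= y -> ff k p x <= ff k p y.
Proof.
  induction k; intros p x y Hxy; simpl.
  - destruct Rle_dec; destruct Rle_dec; lra.
  - assert (H1 := IHk (false :: p) x y Hxy). assert (H2 := IHk (true :: p) x y Hxy). lra.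
Qed.

Lemma ff_loc k : forall p x, exists d, d > 0 /\ forall z, Rabs (z - x) < d ->
  Rabs (ff k p z - ff k p x) <= / 2 ^ k.
Proof.
  induction k; intros p x.
  - exists 1. split; [lra|]. intros z _. simpl pow. rewrite Rinv_1.
    assert (H1 := ff_01 0 p z). assert (H2 := ff_01 0 p x). apply Rabs_le; lra.
  - assert (Hsep := child_sep p). rewrite pow2_S.
    change (ff (S k) p ?y) with ((ff k (false :: p) y + ff k (true :: p) y) / 2).
    destruct (Rlt_le_dec x (fst (node (true :: p)))) as [L|L].
    + destruct (IHk (false :: p) x) as [d [Hd Hd']].
      exists (Rmin d (fst (node (true :: p)) - x)). split; [unfold Rmin; destruct Rle_dec; lra|].
      intros z Hz. assert (Hz1 : Rabs (z - x) < d) by (unfold Rmin in Hz; destruct Rle_dec; lra).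
      assert (Hz2 : z < fst (node (true :: p))) by (unfold Rmin in Hz; destruct Rle_dec; apply Rabs_def2 in Hz; lra).
      rewrite (ff_left k (true :: p) z), (ff_left k (true :: p) x); auto.
      specialize (Hd' z Hz1). apply Rabs_le. apply Rabs_le_inv in Hd'. lra.
    + destruct (IHk (true :: p) x) as [d [Hd Hd']].
      exists (Rmin d (x - snd (node (false :: p)))). split; [unfold Rmin; destruct Rle_dec; lra|].
      intros z Hz. assert (Hz1 : Rabs (z - x) < d) by (unfold Rmin in Hz; destruct Rle_dec; lra).
      assert (Hz2 : snd (node (false :: p)) <= z) by (unfold Rmin in Hz; destruct Rle_dec; apply Rabs_def2 in Hz; lra).
      rewrite (ff_right k (false :: p) z), (ff_right k (false :: p) x); try lra.
      specialize (Hd' z Hz1). apply Rabs_le. apply Rabs_le_inv in Hd'. lra.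
Qed.

Lemma ind_children x p :
  ind (inn x (node (false :: p))) + ind (inn x (node (true :: p))) <= ind (inn x (node p)).
Proof.
  assert (Hsep := child_sep p). unfold ind.
  destruct (excluded_middle_informative (inn x (node (false :: p)))) as [A|A];
  destruct (excluded_middle_informative (inn x (node (true :: p)))) as [B|B];
  destruct (excluded_middle_informative (inn x (node p))) as [D|D]; try lra;
  try (unfold inn in A, B; lra);
  try (exfalso; apply D; apply (inn_parent _ _ false); auto; fail);
  try (exfalso; apply D; apply (inn_parent _ _ true); auto; fail).
Qed.

Lemma ff_gap l r : l < r -> free Cset l r -> forall k p,
  ff k p r - ff k p l <= (ind (inn l (node p)) + ind (inn r (node p))) * / 2 ^ k.
Proof.
  intros Hlr Hf k. induction k; intros p.
  - simpl pow. rewrite Rinv_1. simpl ff.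
    assert (I1 := ind_01 (inn l (node p))). assert (I2 := ind_01 (inn r (node p))).
    destruct (Rle_dec (snd (node p)) r) as [A|A]; destruct (Rle_dec (snd (node p)) l) as [B|B]; try lra.
    destruct (Rle_lt_dec 1 (ind (inn l (node p)) + ind (inn r (node p)))) as [C|C]; [lra|].
    exfalso.
    assert (Nl : ~ inn l (node p)).
    { intro Hl. unfold ind in C. destruct excluded_middle_informative; [|contradiction].
      destruct excluded_middle_informative; lra. }
    assert (Nr : ~ inn r (node p)).
    { intro Hr. unfold ind in C. destruct (excluded_middle_informative (inn r _)); [|contradiction].
      destruct excluded_middle_informative; lra. }
    destruct (nonempty p) as [x [Hx Cx]]. assert (Hlt := node_lt p).
    unfold inn in Nl, Nr, Hx. apply (Hf x); [lra|auto].
  - change (ff (S k) p ?y) with ((ff k (false :: p) y + ff k (true :: p) y) / 2).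
    rewrite pow2_S.
    specialize (IHk (false :: p)) as H1. specialize (IHk (true :: p)) as H2.
    assert (Cl := ind_children l p). assert (Cr := ind_children r p).
    assert (Hp := pow2_pos k).
    assert (E : (ind (inn l (node (false :: p))) + ind (inn r (node (false :: p)))) * / 2 ^ k +
                (ind (inn l (node (true :: p))) + ind (inn r (node (true :: p)))) * / 2 ^ k
             <= (ind (inn l (node p)) + ind (inn r (node p))) * / 2 ^ k) by nra.
    lra.
Qed.

Lemma ff_grow x : Un_growing (fun k => ff k nil x).
Proof. intros k. apply ff_grow_gen. Qed.

Lemma ff_ub x : has_ub (fun k => ff k nil x).
Proof. exists 1. intros y [k Hk]. subst y. apply ff_01. Qed.

Definition glim (x : R) : R := proj1_sig (growing_cv _ (ff_grow x) (ff_ub x)).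

Lemma glim_ge x k : ff k nil x <= glim x.
Proof.
  unfold glim. destruct (growing_cv _ (ff_grow x) (ff_ub x)) as [l Hl]. simpl.
  apply (growing_ineq _ l (ff_grow x) Hl).
Qed.

Lemma ff_far k j p x : ff (k + j) p x <= ff k p x + 2 * / 2 ^ k - 2 * / 2 ^ (k + j).
Proof.
  induction j.
  - rewrite Nat.add_0_r. lra.
  - replace (k + S j)%nat with (S (k + j)) by lia.
    assert (H := ff_step (k + j) p x). rewrite pow2_S. lra.
Qed.

Lemma glim_le x k : glim x <= ff k nil x + 2 * / 2 ^ k.
Proof.
  unfold glim. destruct (growing_cv _ (ff_grow x) (ff_ub x)) as [l Hl]. simpl.
  apply (lim_le _ l _ k Hl). intros n Hn.
  replace n with (k + (n - k))%nat by lia.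
  assert (H := ff_far k (n - k) nil x). assert (Hp := pow2_pos (k + (n - k))). lra.
Qed.

Lemma glim_01 x : 0 <= glim x <= 1.
Proof.
  split.
  - assert (H := glim_ge x 0). assert (H2 := ff_01 0 nil x). lra.
  - unfold glim. destruct (growing_cv _ (ff_grow x) (ff_ub x)) as [l Hl]. simpl.
    apply (lim_le _ l _ 0 Hl). intros n _. apply ff_01.
Qed.

Lemma glim_cont x : forall e, e > 0 -> exists d, d > 0 /\
  forall z, Rabs (z - x) < d -> Rabs (glim z - glim x) < e.
Proof.
  intros e He. destruct (pow2_small (e / 4)) as [k Hk]; [lra|].
  destruct (ff_loc k nil x) as [d [Hd Hd']]. exists d; split; auto.
  intros z Hz. specialize (Hd' z Hz). apply Rabs_le_inv in Hd'.
  assert (A1 := glim_ge z k). assert (A2 := glim_le z k).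
  assert (A3 := glim_ge x k). assert (A4 := glim_le x k).
  apply Rabs_def1; lra.
Qed.

Lemma glim_const l r : l < r -> free Cset l r -> glim l = glim r.
Proof.
  intros Hlr Hf. apply Rle_antisym.
  - apply (small_le _ _ 2); [lra|]. intros k.
    assert (A1 := glim_le l k). assert (A3 := glim_ge r k).
    assert (M := ff_mono k nil l r (Rlt_le _ _ Hlr)). lra.
  - apply (small_le _ _ 4); [lra|]. intros k.
    assert (A1 := glim_le r k). assert (A3 := glim_ge l k).
    assert (G := ff_gap l r Hlr Hf k nil).
    assert (I1 := ind_01 (inn l (node nil))). assert (I2 := ind_01 (inn r (node nil))).
    assert (Hp := pow2_pos k).
    assert ((ind (inn l (node nil)) + ind (inn r (node nil))) * / 2 ^ k <= 2 * / 2 ^ k) by nra.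
    lra.
Qed.

Lemma glim_left x : x < l0 -> glim x = 0.
Proof.
  intros Hx. apply Rle_antisym; [|apply glim_01].
  apply (small_le _ _ 2); [lra|]. intros k. assert (A := glim_le x k).
  rewrite (ff_left k nil x) in A; [lra|simpl; lra].
Qed.

Lemma glim_right x : r0 <= x -> glim x = 1.
Proof.
  intros Hx. apply Rle_antisym; [apply glim_01|].
  assert (A := glim_ge x 0). rewrite (ff_right 0 nil x) in A; [lra|simpl; lra].
Qed.

End Tree.

Definition Aprop (phi : R -> R) : Prop :=
  exists k1 k2 w1 w2, k1 < k2 /\ w1 < w2 /\
    forall u v, k1 <= u -> u < v -> v <= k2 ->
      (exists s, u < s < v /\ phi s < w1) /\ (exists s, u < s < v /\ phi s > w2).

Definition Bprop (phi : R -> R) : Prop :=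
  forall a b eta, a < b -> eta > 0 -> exists a' b', a <= a' /\ a' < b' /\ b' <= b /\
    forall s t, a' <= s <= b' -> a' <= t <= b' -> Rabs (phi s - phi t) < eta.

Lemma notA_B (phi : R -> R) (K : R) : (forall x, - K <= phi x <= K) -> ~ Aprop phi -> Bprop phi.
Proof.
  intros Hb HnA a b eta Hab Heta. apply NNPP; intro HnB.
  assert (NB : forall a' b', a <= a' -> a' < b' -> b' <= b ->
             exists s t, a' <= s <= b' /\ a' <= t <= b' /\ Rabs (phi s - phi t) >= eta).
  { intros a' b' H1 H2 H3. apply NNPP; intro Hn. apply HnB. exists a', b'.
    split; auto. split; auto. split; auto. intros s t Hs Ht. apply Rnot_ge_lt. intro Hge.
    apply Hn. exists s, t. auto. }
  assert (Claim : forall n : nat, exists u v lam mu, a <= u /\ u < v /\ v <= b /\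
            (forall s, u <= s <= v -> lam <= phi s <= mu) /\ mu - lam <= 2 * K - INR n * (eta / 3)).
  { induction n as [|n IH].
    - exists a, b, (- K), K. split; [lra|split; [auto|split; [lra|]]]. split; [intros; apply Hb|]. simpl. lra.
    - destruct IH as [u [v [lam [mu [Hu [Huv [Hv [Hs Hm]]]]]]]].
      destruct (NB u v Hu Huv Hv) as [s [t [Hs1 [Ht1 Hst]]]].
      assert (Hsb := Hs s Hs1). assert (Htb := Hs t Ht1).
      assert (Hmu : mu - lam >= eta).
      { unfold Rabs in Hst. destruct Rcase_abs in Hst; lra. }
      set (w1 := lam + eta / 3). set (w2 := mu - eta / 3).
      assert (Hnot : ~ (forall u' v', u <= u' -> u' < v' -> v' <= v ->
                 (exists s, u' < s < v' /\ phi s < w1) /\ (exists s, u' < s < v' /\ phi s > w2))).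
      { intro Hall. apply HnA. exists u, v, w1, w2. split; auto. split; [unfold w1, w2; lra|auto]. }
      apply not_all_ex_not in Hnot. destruct Hnot as [u' Hnot].
      apply not_all_ex_not in Hnot. destruct Hnot as [v' Hnot].
      apply imply_to_and in Hnot. destruct Hnot as [Hu' Hnot].
      apply imply_to_and in Hnot. destruct Hnot as [Huv' Hnot].
      apply imply_to_and in Hnot. destruct Hnot as [Hv' Hnot].
      apply not_and_or in Hnot.
      set (u2 := u' + (v' - u') / 3). set (v2 := v' - (v' - u') / 3).
      rewrite S_INR.
      destruct Hnot as [Hn1|Hn2].
      + exists u2, v2, w1, mu. split; [unfold u2; lra|]. split; [unfold u2, v2; lra|].
        split; [unfold v2; lra|]. split; [|unfold w1; lra].
        intros s0 Hs0. split; [|apply Hs; unfold u2, v2 in Hs0; lra].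
        apply Rnot_lt_le. intro L. apply Hn1. exists s0. split; [unfold u2, v2 in Hs0; lra|auto].
      + exists u2, v2, lam, w2. split; [unfold u2; lra|]. split; [unfold u2, v2; lra|].
        split; [unfold v2; lra|]. split; [|unfold w2; lra].
        intros s0 Hs0. split; [apply Hs; unfold u2, v2 in Hs0; lra|].
        apply Rnot_lt_le. intro L. apply Hn2. exists s0. split; [unfold u2, v2 in Hs0; lra|auto]. }
  assert (HK : 0 <= K) by (specialize (Hb a); lra).
  destruct (INR_archimed (eta / 3) (2 * K) ltac:(lra)) as [n Hn].
  destruct (Claim n) as [u [v [lam [mu [Hu [Huv [Hv [Hs Hm]]]]]]]].
  assert (H1 := Hs u ltac:(lra)). lra.
Qed.

Lemma near_inf (phi : R -> R) (K : R) : IVP phi -> (forall x, phi x >= - K) ->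
  forall l r tau, l < r -> tau > 0 -> exists p, l < p < r /\ forall x, l <= x <= r -> phi p < phi x + tau.
Proof.
  intros HV Hb l r tau Hlr Ht.
  set (E := fun v => exists x, l <= x <= r /\ v = - phi x).
  assert (HE : bound E) by (exists K; intros v [x [Hx Ev]]; subst v; specialize (Hb x); lra).
  assert (HEn : exists v, E v) by (exists (- phi l); exists l; split; [lra|auto]).
  destruct (completeness E HE HEn) as [M [HM1 HM2]].
  assert (Hge : forall x, l <= x <= r -> phi x >= - M).
  { intros x Hx. assert (E (- phi x)) by (exists x; auto). specialize (HM1 _ H). lra. }
  assert (Hz : exists z, l <= z <= r /\ phi z < - M + tau / 2).
  { apply NNPP; intro Hn.
    assert (Hub : is_upper_bound E (M - tau / 2)).
    { intros v [x [Hx Ev]]. subst v. apply Rnot_lt_le; intro L. apply Hn. exists x. split; auto. lra. }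
    specialize (HM2 _ Hub). lra. }
  destruct Hz as [z [Hz Hpz]].
  destruct (Req_dec z l) as [El|El].
  - subst z. set (m := (l + r) / 2).
    destruct (Rlt_le_dec (phi m) (- M + tau)) as [L|L].
    + exists m. split; [unfold m; lra|]. intros x Hx. specialize (Hge x Hx). lra.
    + destruct (HV l m (phi l + tau / 4) ltac:(unfold m; lra)) as [w [Hw Ew]]; [left; lra|].
      exists w. assert (w <> l) by (intro; subst; lra). assert (w <> m) by (intro; subst; lra).
      split; [unfold m in *; lra|]. intros x Hx. specialize (Hge x Hx). lra.
  - destruct (Req_dec z r) as [Er|Er].
    + subst z. set (m := (l + r) / 2).
      destruct (Rlt_le_dec (phi m) (- M + tau)) as [L|L].
      * exists m. split; [unfold m; lra|]. intros x Hx. specialize (Hge x Hx). lra.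
      * destruct (HV m r (phi r + tau / 4) ltac:(unfold m; lra)) as [w [Hw Ew]]; [right; lra|].
        exists w. assert (w <> r) by (intro; subst; lra). assert (w <> m) by (intro; subst; lra).
        split; [unfold m in *; lra|]. intros x Hx. specialize (Hge x Hx). lra.
    + exists z. split; [lra|]. intros x Hx. specialize (Hge x Hx). lra.
Qed.

Definition mk_sp (P : nat -> R -> R -> (R*R)*(R*R) -> Prop)
  (Hex : forall n l r, l < r -> exists q, P n l r q) : nat -> R -> R -> (R*R)*(R*R) :=
  fun n l r => match Rlt_dec l r with
               | left h => proj1_sig (constructive_indefinite_description _ (Hex n l r h))
               | right _ => ((0, 0), (0, 0)) end.

Lemma mk_sp_spec P Hex n l r : l < r -> P n l r (mk_sp P Hex n l r).
Proof.
  intros H. unfold mk_sp. destruct (Rlt_dec l r) as [h|h]; [|contradiction].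
  apply (proj2_sig (constructive_indefinite_description _ (Hex n l r h))).
Qed.

Definition PB (phi : R -> R) (n : nat) (l r : R) (q : (R*R)*(R*R)) : Prop :=
  sp_ok l r q /\
  (forall s t, fst (fst q) <= s <= snd (fst q) -> fst (fst q) <= t <= snd (fst q) -> Rabs (phi s - phi t) < / 2 ^ n) /\
  (forall s t, fst (snd q) <= s <= snd (snd q) -> fst (snd q) <= t <= snd (snd q) -> Rabs (phi s - phi t) < / 2 ^ n).

Lemma PB_ex (phi : R -> R) : Bprop phi -> forall n l r, l < r -> exists q, PB phi n l r q.
Proof.
  intros HB n l r Hlr.
  destruct (HB l (l + (r - l) / 3) (/ 2 ^ n) ltac:(lra) (pow2_pos n)) as [a1 [a2 [H1 [H2 [H3 H4]]]]].
  destruct (HB (r - (r - l) / 3) r (/ 2 ^ n) ltac:(lra) (pow2_pos n)) as [b1 [b2 [G1 [G2 [G3 G4]]]]].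
  exists ((a1, a2), (b1, b2)). unfold PB, sp_ok; simpl.
  split; [lra|]. split; auto.
Qed.

Definition PA (phi : R -> R) (n : nat) (l r : R) (q : (R*R)*(R*R)) : Prop :=
  sp_ok l r q /\ fst (fst q) = l /\ snd (snd q) = r /\
  exists s1 s2, snd (fst q) < s1 < fst (snd q) /\ snd (fst q) < s2 < fst (snd q) /\
    forall x, l <= x <= r -> phi s1 < phi x + / 2 ^ n /\ phi s2 > phi x - / 2 ^ n.

Lemma PA_ex (phi : R -> R) (K : R) : IVP phi -> (forall x, - K <= phi x <= K) ->
  forall n l r, l < r -> exists q, PA phi n l r q.
Proof.
  intros HV Hb n l r Hlr.
  destruct (near_inf phi K HV ltac:(intro x; specialize (Hb x); lra) l r (/ 2 ^ n) Hlr (pow2_pos n))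
    as [p1 [Hp1 Hp1']].
  destruct (near_inf (fun x => - phi x) K (IVP_opp phi HV) ltac:(intro x; specialize (Hb x); lra)
             l r (/ 2 ^ n) Hlr (pow2_pos n)) as [p2 [Hp2 Hp2']].
  set (h := Rmin (Rmin (p1 - l) (r - p1)) (Rmin (Rmin (p2 - l) (r - p2)) ((r - l) / 4)) / 2).
  assert (Hh : 0 < h /\ h < p1 - l /\ h < r - p1 /\ h < p2 - l /\ h < r - p2 /\ h <= (r - l) / 4)
    by (unfold h, Rmin; repeat destruct Rle_dec; lra).
  exists ((l, l + h), (r - h, r)). unfold PA, sp_ok; simpl.
  split; [lra|]. split; auto. split; auto.
  exists p1, p2. split; [lra|]. split; [lra|].
  intros x Hx. specialize (Hp1' x Hx). specialize (Hp2' x Hx). lra.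
Qed.

Lemma atan_lt_tan (a w : R) : atan a < w -> w < PI / 2 -> a < tan w.
Proof.
  intros H1 H2. rewrite <- (tan_atan a) at 1. assert (Hb := atan_bound a).
  apply tan_increasing; lra.
Qed.

Lemma atan_gt_tan (a w : R) : atan a > w -> - PI / 2 < w -> a > tan w.
Proof.
  intros H1 H2. rewrite <- (tan_atan a) at 1. assert (Hb := atan_bound a).
  apply tan_increasing; lra.
Qed.

Lemma atan_close (y : R) : forall e, e > 0 -> exists d, d > 0 /\
  forall a, Rabs (atan a - atan y) < d -> Rabs (a - y) < e.
Proof.
  intros e He. destruct (tan_cont (atan y) (atan_bound y) e He) as [d [Hd Hd']].
  exists d; split; auto. intros a Ha. specialize (Hd' _ Ha). rewrite !tan_atan in Hd'. auto.
Qed.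

Lemma conv_near (F g : R -> R) (x e : R) : e > 0 ->
  (forall e', e' > 0 -> exists d, d > 0 /\ forall z, Rabs (z - x) < d -> Rabs (g z - g x) < e') ->
  exists tau, tau > 0 /\ tau <= e /\ forall s, Rabs (s - x) < tau ->
    (atan (F s) > atan (F x) - tau -> F s + g s > F x + g x - e) /\
    (atan (F s) < atan (F x) + tau -> F s + g s < F x + g x + e).
Proof.
  intros He Hg.
  destruct (atan_close (F x) (e / 2) ltac:(lra)) as [dt [Hdt Hdt']].
  destruct (Hg (e / 2) ltac:(lra)) as [dg [Hdg Hdg']].
  exists (Rmin e (Rmin dt dg)). split; [unfold Rmin; repeat destruct Rle_dec; lra|].
  split; [unfold Rmin; repeat destruct Rle_dec; lra|].
  intros s Hs. assert (Hs1 : Rabs (s - x) < dg) by (unfold Rmin in Hs; repeat destruct Rle_dec; lra).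
  specialize (Hdg' s Hs1). apply Rabs_def2 in Hdg'.
  split; intros Ha.
  - destruct (Rle_lt_dec (atan (F x)) (atan (F s))) as [L|L].
    + assert (F x <= F s).
      { apply Rnot_lt_le; intro L2. apply atan_increasing in L2. lra. }
      lra.
    + assert (Rabs (atan (F s) - atan (F x)) < dt).
      { apply Rabs_def1; unfold Rmin in Ha; repeat destruct Rle_dec; lra. }
      specialize (Hdt' _ H). apply Rabs_def2 in Hdt'. lra.
  - destruct (Rle_lt_dec (atan (F s)) (atan (F x))) as [L|L].
    + assert (F s <= F x).
      { apply Rnot_lt_le; intro L2. apply atan_increasing in L2. lra. }
      lra.
    + assert (Rabs (atan (F s) - atan (F x)) < dt).
      { apply Rabs_def1; unfold Rmin in Ha; repeat destruct Rle_dec; lra. }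
      specialize (Hdt' _ H). apply Rabs_def2 in Hdt'. lra.
Qed.

Lemma gap_of_const (F g : R -> R) (C : R -> Prop) : IVP F ->
  (forall u v, u < v -> free C u v -> g u = g v) -> gapIVP (fun x => F x + g x) C.
Proof.
  intros HF Hc u v y Huv Hf Hy.
  assert (Hcst : forall x, u <= x <= v -> g x = g u).
  { intros x Hx. destruct (Req_dec x u) as [E|E]; [subst; auto|].
    symmetry. apply Hc; [lra|]. intros z Hz. apply Hf. lra. }
  destruct (HF u v (y - g u) Huv) as [x [Hx Ex]].
  { rewrite (Hcst v) in Hy by lra. lra. }
  exists x. split; auto. rewrite (Hcst x Hx). lra.
Qed.

Fixpoint Rk (k : nat) (p : list bool) : list bool :=
  match k with O => p | S k' => true :: Rk k' p end.

Lemma Rk_len k p : length (Rk k p) = (k + length p)%nat.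
Proof. induction k; simpl; auto. Qed.

Lemma choose_n (tau c : R) : tau > 0 -> c > 0 -> exists n, / 2 ^ n < tau /\ c * / 2 ^ n < tau.
Proof.
  intros Ht Hc. destruct (pow2_small (Rmin tau (tau / c))) as [n Hn].
  { unfold Rmin; destruct Rle_dec; [lra|]. apply Rdiv_lt_0_compat; lra. }
  exists n. split; [unfold Rmin in Hn; destruct Rle_dec; lra|].
  assert (Hn' : / 2 ^ n < tau / c) by (unfold Rmin in Hn; destruct Rle_dec; lra).
  apply (Rmult_lt_compat_l c) in Hn'; auto.
  replace (c * (tau / c)) with tau in Hn' by (field; lra). auto.
Qed.

Section CaseA.
Variable F : R -> R.
Hypothesis HF : IVP F.
Variables k1 k2 w1 w2 : R.
Hypothesis Hk : k1 < k2.
Hypothesis Hw : w1 < w2.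
Hypothesis HA : forall u v, k1 <= u -> u < v -> v <= k2 ->
  (exists s, u < s < v /\ atan (F s) < w1) /\ (exists s, u < s < v /\ atan (F s) > w2).

Let phi := fun x => atan (F x).
Let l0 := k1 + (k2 - k1) / 4.
Let r0 := k2 - (k2 - k1) / 4.
Lemma Hl0A : l0 < r0.
Proof. unfold l0, r0; lra. Qed.
Lemma KbA : forall x, - (PI / 2) <= phi x <= PI / 2.
Proof. intros x. assert (H := atan_bound (F x)). unfold phi; lra. Qed.
Let HV : IVP phi := IVP_atan F HF.
Let spA := mk_sp (PA phi) (PA_ex phi (PI / 2) HV KbA).
Lemma HspA : forall n l r, l < r -> sp_ok l r (spA n l r).
Proof. intros n l r H. apply (mk_sp_spec (PA phi) _ n l r H). Qed.

Let N := node l0 r0 spA.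
Let C := Cset l0 r0 spA.
Let G := glim l0 r0 spA Hl0A HspA.

Lemma nodeA p : fst (N (false :: p)) = fst (N p) /\ snd (N (true :: p)) = snd (N p) /\
  exists s1 s2, snd (N (false :: p)) < s1 < fst (N (true :: p)) /\
                snd (N (false :: p)) < s2 < fst (N (true :: p)) /\
    forall x, fst (N p) <= x <= snd (N p) -> phi s1 < phi x + / 2 ^ length p /\ phi s2 > phi x - / 2 ^ length p.
Proof.
  destruct (node_cases l0 r0 spA Hl0A HspA p) as [E1 [E2 _]].
  assert (HP := mk_sp_spec (PA phi) (PA_ex phi (PI / 2) HV KbA) (length p) _ _ (node_lt l0 r0 spA Hl0A HspA p)).
  fold spA in HP. destruct HP as [_ [P1 [P2 P3]]].
  unfold N. rewrite E1, E2. split; [exact P1|split; [exact P2|exact P3]].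
Qed.

Lemma PLphi x : C x -> forall tau, tau > 0 ->
  (exists d, d > 0 /\ free C (x - d) x) \/
  (exists s1 s2, x - tau < s1 < x /\ x - tau < s2 < x /\ ~ C s1 /\ ~ C s2 /\
     phi s1 < phi x + tau /\ phi s2 > phi x - tau).
Proof.
  intros Cx tau Ht.
  destruct (choose_n tau (r0 - l0) Ht ltac:(unfold r0, l0; lra)) as [n [Hn1 Hn2]].
  destruct (Cx n) as [p0 [Hlen Hin]]. change (node l0 r0 spA) with N in Hin.
  destruct (classic (exists j, inn x (N (Lk j p0)) /\ ~ inn x (N (false :: Lk j p0)))) as [[j [Hj1 Hj2]]|Hno].
  - right. set (q := Lk j p0) in *.
    destruct (C_step l0 r0 spA Hl0A HspA x q Cx Hj1) as [b Hb]. destruct b; [|contradiction].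
    destruct (nodeA q) as [E1 [E2 [s1 [s2 [Hs1 [Hs2 Hs]]]]]].
    assert (Hlq : length q = (j + n)%nat) by (unfold q; rewrite Lk_len; lia).
    assert (Hlen_q := node_len l0 r0 spA Hl0A HspA q). fold N in Hlen_q. rewrite Hlq in Hlen_q.
    assert (Hm := pow2_mono n (j + n) ltac:(lia)).
    assert (Hmm : (r0 - l0) * / 2 ^ (j + n) <= (r0 - l0) * / 2 ^ n) by (apply Rmult_le_compat_l; [unfold r0, l0; lra|auto]).
    assert (Hxq : fst (N q) <= x <= snd (N q)) by exact Hj1.
    assert (Hxt : fst (N (true :: q)) <= x) by (destruct Hb; auto).
    assert (Hc1 := node_lt l0 r0 spA Hl0A HspA (false :: q)). fold N in Hc1.
    destruct (Hs x Hxq) as [P1 P2]. rewrite Hlq in P1, P2.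
    exists s1, s2.
    split; [lra|]. split; [lra|].
    split; [apply (gap_free l0 r0 spA Hl0A HspA q); auto|].
    split; [apply (gap_free l0 r0 spA Hl0A HspA q); auto|].
    split; lra.
  - left.
    assert (Hall : forall k, inn x (N (Lk k p0))).
    { induction k; [exact Hin|]. apply NNPP; intro Hk'. apply Hno. exists k. split; auto. }
    assert (Hfst : forall k, fst (N (Lk k p0)) = fst (N p0)).
    { induction k; auto. simpl Lk. destruct (nodeA (Lk k p0)) as [E1 _]. rewrite E1; auto. }
    assert (Hxe : x <= fst (N p0)).
    { apply (small_le _ _ (r0 - l0)); [unfold r0, l0; lra|]. intros k.
      specialize (Hall k). destruct Hall as [_ Hx2].
      assert (Hl := node_len l0 r0 spA Hl0A HspA (Lk k p0)). fold N in Hl.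
      rewrite Lk_len, Hfst in Hl.
      assert (Hm := pow2_mono k (k + length p0) ltac:(lia)).
      assert ((r0 - l0) * / 2 ^ (k + length p0) <= (r0 - l0) * / 2 ^ k) by (apply Rmult_le_compat_l; [unfold r0, l0; lra|auto]).
      lra. }
    assert (Hxe' : x = fst (N p0)) by (destruct Hin; lra).
    destruct (near l0 r0 spA Hl0A HspA p0 x Hin) as [d [Hd Hd']].
    exists d. split; auto. intros z Hz Cz.
    destruct (Cz n) as [q [Hq Hinq]].
    assert (E : q = p0) by (apply (Hd' q z); [lia|apply Rabs_def1; lra|auto]).
    subst q. change (node l0 r0 spA) with N in Hinq. destruct Hinq. lra.
Qed.

Lemma PRphi x : C x -> forall tau, tau > 0 ->
  (exists d, d > 0 /\ free C x (x + d)) \/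
  (exists s1 s2, x < s1 < x + tau /\ x < s2 < x + tau /\ ~ C s1 /\ ~ C s2 /\
     phi s1 < phi x + tau /\ phi s2 > phi x - tau).
Proof.
  intros Cx tau Ht.
  destruct (choose_n tau (r0 - l0) Ht ltac:(unfold r0, l0; lra)) as [n [Hn1 Hn2]].
  destruct (Cx n) as [p0 [Hlen Hin]]. change (node l0 r0 spA) with N in Hin.
  destruct (classic (exists j, inn x (N (Rk j p0)) /\ ~ inn x (N (true :: Rk j p0)))) as [[j [Hj1 Hj2]]|Hno].
  - right. set (q := Rk j p0) in *.
    destruct (C_step l0 r0 spA Hl0A HspA x q Cx Hj1) as [b Hb]. destruct b; [contradiction|].
    destruct (nodeA q) as [E1 [E2 [s1 [s2 [Hs1 [Hs2 Hs]]]]]].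
    assert (Hlq : length q = (j + n)%nat) by (unfold q; rewrite Rk_len; lia).
    assert (Hlen_q := node_len l0 r0 spA Hl0A HspA q). fold N in Hlen_q. rewrite Hlq in Hlen_q.
    assert (Hm := pow2_mono n (j + n) ltac:(lia)).
    assert (Hmm : (r0 - l0) * / 2 ^ (j + n) <= (r0 - l0) * / 2 ^ n) by (apply Rmult_le_compat_l; [unfold r0, l0; lra|auto]).
    assert (Hxq : fst (N q) <= x <= snd (N q)) by exact Hj1.
    assert (Hxt : x <= snd (N (false :: q))) by (destruct Hb; auto).
    assert (Hc1 := node_lt l0 r0 spA Hl0A HspA (true :: q)). fold N in Hc1.
    destruct (Hs x Hxq) as [P1 P2]. rewrite Hlq in P1, P2.
    exists s1, s2.
    split; [lra|]. split; [lra|].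
    split; [apply (gap_free l0 r0 spA Hl0A HspA q); auto|].
    split; [apply (gap_free l0 r0 spA Hl0A HspA q); auto|].
    split; lra.
  - left.
    assert (Hall : forall k, inn x (N (Rk k p0))).
    { induction k; [exact Hin|]. apply NNPP; intro Hk'. apply Hno. exists k. split; auto. }
    assert (Hsnd : forall k, snd (N (Rk k p0)) = snd (N p0)).
    { induction k; auto. simpl Rk. destruct (nodeA (Rk k p0)) as [_ [E2 _]]. rewrite E2; auto. }
    assert (Hxe : snd (N p0) <= x).
    { assert (Hneg : - x <= - snd (N p0)); [|lra].
      apply (small_le _ _ (r0 - l0)); [unfold r0, l0; lra|]. intros k.
      specialize (Hall k). destruct Hall as [Hx1 _].
      assert (Hl := node_len l0 r0 spA Hl0A HspA (Rk k p0)). fold N in Hl.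
      rewrite Rk_len, Hsnd in Hl.
      assert (Hm := pow2_mono k (k + length p0) ltac:(lia)).
      assert ((r0 - l0) * / 2 ^ (k + length p0) <= (r0 - l0) * / 2 ^ k) by (apply Rmult_le_compat_l; [unfold r0, l0; lra|auto]).
      lra. }
    assert (Hxe' : x = snd (N p0)) by (destruct Hin; lra).
    destruct (near l0 r0 spA Hl0A HspA p0 x Hin) as [d [Hd Hd']].
    exists d. split; auto. intros z Hz Cz.
    destruct (Cz n) as [q [Hq Hinq]].
    assert (E : q = p0) by (apply (Hd' q z); [lia|apply Rabs_def1; lra|auto]).
    subst q. change (node l0 r0 spA) with N in Hinq. destruct Hinq. lra.
Qed.

Lemma caseA_result : exists g : R -> R, (forall x, continuity_pt g x) /\ (exists a b, g a <> g b) /\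
  Darboux (fun x => F x + g x).
Proof.
  destruct (HA k1 k2 ltac:(lra) Hk ltac:(lra)) as [[s1 [_ Hs1]] [s2 [_ Hs2]]].
  assert (B1 := atan_bound (F s1)). assert (B2 := atan_bound (F s2)).
  assert (Hw1 : - PI / 2 < w1) by lra. assert (Hw2 : w2 < PI / 2) by lra.
  assert (Htw : tan w1 < tan w2) by (apply tan_increasing; lra).
  set (th := (tan w2 - tan w1) / 2).
  assert (Hth : th > 0) by (unfold th; lra).
  assert (G01 := glim_01 l0 r0 spA Hl0A HspA). fold G in G01.
  assert (Gc := glim_cont l0 r0 spA Hl0A HspA). fold G in Gc.
  assert (gc : forall x e, e > 0 -> exists d, d > 0 /\ forall z, Rabs (z - x) < d -> Rabs (th * G z - th * G x) < e).
  { intros x e He. destruct (Gc x (e / th)) as [d [Hd Hd']]. { apply Rdiv_lt_0_compat; lra. }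
    exists d; split; auto. intros z Hz. specialize (Hd' z Hz).
    replace (th * G z - th * G x) with (th * (G z - G x)) by ring.
    rewrite Rabs_mult, Rabs_right by lra.
    apply (Rmult_lt_compat_l th) in Hd'; auto. replace (th * (e / th)) with e in Hd' by (field; lra). auto. }
  exists (fun x => th * G x). split; [|split].
  - intros x. apply cont_of. apply gc.
  - exists (l0 - 1), r0. unfold G. rewrite glim_left, glim_right; [lra|lra|lra].
  - apply IVP_Darboux.
    set (H := fun x => F x + th * G x).
    assert (Hcl := C_closed l0 r0 spA Hl0A HspA). fold C in Hcl.
    apply (lemA H C (tan w1 + th) (tan w2) ((k2 - k1) / 4)); auto.
    + apply gap_of_const; auto. intros u v Huv Hf. unfold G. rewrite (glim_const l0 r0 spA Hl0A HspA u v Huv Hf). auto.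
    + unfold th; lra.
    + lra.
    + intros x u v Cx Hu Huv Hv Hf. assert (Hr := C_root l0 r0 spA x Cx).
      assert (Hku : k1 <= u) by (unfold l0, r0 in Hr; lra).
      assert (Hkv : v <= k2) by (unfold l0, r0 in Hr; lra).
      destruct (HA u v Hku Huv Hkv) as [[s [Hs Hs']] _].
      exists s. split; auto. unfold H. assert (F s < tan w1) by (apply atan_lt_tan; [exact Hs'|lra]).
      specialize (G01 s). nra.
    + intros x u v Cx Hu Huv Hv Hf. assert (Hr := C_root l0 r0 spA x Cx).
      assert (Hku : k1 <= u) by (unfold l0, r0 in Hr; lra).
      assert (Hkv : v <= k2) by (unfold l0, r0 in Hr; lra).
      destruct (HA u v Hku Huv Hkv) as [_ [s [Hs Hs']]].
      exists s. split; auto. unfold H. assert (F s > tan w2) by (apply atan_gt_tan; [exact Hs'|lra]).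
      specialize (G01 s). nra.
    + intros x e Cx He. destruct (conv_near F (fun x => th * G x) x e He (gc x)) as [tau [Ht [Hte Htau]]].
      destruct (PLphi x Cx tau Ht) as [Hl|[s1' [s2' [Hs1' [Hs2' [C1 [C2 [P1 P2]]]]]]]]; [left; auto|right].
      exists s2'. split; [lra|]. split; auto. apply (Htau s2'); [apply Rabs_def1; lra|auto].
    + intros x e Cx He. destruct (conv_near F (fun x => th * G x) x e He (gc x)) as [tau [Ht [Hte Htau]]].
      destruct (PLphi x Cx tau Ht) as [Hl|[s1' [s2' [Hs1' [Hs2' [C1 [C2 [P1 P2]]]]]]]]; [left; auto|right].
      exists s1'. split; [lra|]. split; auto. apply (Htau s1'); [apply Rabs_def1; lra|auto].
    + intros x e Cx He. destruct (conv_near F (fun x => th * G x) x e He (gc x)) as [tau [Ht [Hte Htau]]].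
      destruct (PRphi x Cx tau Ht) as [Hl|[s1' [s2' [Hs1' [Hs2' [C1 [C2 [P1 P2]]]]]]]]; [left; auto|right].
      exists s2'. split; [lra|]. split; auto. apply (Htau s2'); [apply Rabs_def1; lra|auto].
    + intros x e Cx He. destruct (conv_near F (fun x => th * G x) x e He (gc x)) as [tau [Ht [Hte Htau]]].
      destruct (PRphi x Cx tau Ht) as [Hl|[s1' [s2' [Hs1' [Hs2' [C1 [C2 [P1 P2]]]]]]]]; [left; auto|right].
      exists s1'. split; [lra|]. split; auto. apply (Htau s1'); [apply Rabs_def1; lra|auto].
Qed.

End CaseA.

Section CaseB.
Variable F : R -> R.
Hypothesis HF : IVP F.
Hypothesis HB : Bprop (fun x => atan (F x)).

Let phi := fun x => atan (F x).
Let spB := mk_sp (PB phi) (PB_ex phi HB).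
Lemma HspB : forall n l r, l < r -> sp_ok l r (spB n l r).
Proof. intros n l r H. apply (mk_sp_spec (PB phi) _ n l r H). Qed.
Lemma Hl0B : 0 < 1. Proof. lra. Qed.

Let N := node 0 1 spB.
Let C := Cset 0 1 spB.
Let G := glim 0 1 spB Hl0B HspB.

Lemma phi_contC x : C x -> forall e, e > 0 -> exists d, d > 0 /\
  forall z, C z -> Rabs (z - x) < d -> Rabs (phi z - phi x) < e.
Proof.
  intros Cx e He. destruct (pow2_small e He) as [n Hn].
  destruct (Cx (S n)) as [p [Hlen Hin]].
  destruct (near 0 1 spB Hl0B HspB p x Hin) as [d [Hd Hd']].
  exists d. split; auto. intros z Cz Hz.
  destruct (Cz (S n)) as [q [Hq Hinq]].
  assert (E : q = p) by (apply (Hd' q z); [lia|auto|auto]). subst q.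
  destruct p as [|b p']; [simpl in Hlen; discriminate|].
  simpl in Hlen. injection Hlen as Hlen.
  destruct (node_cases 0 1 spB Hl0B HspB p') as [E1 [E2 _]].
  assert (HP := mk_sp_spec (PB phi) (PB_ex phi HB) (length p') _ _ (node_lt 0 1 spB Hl0B HspB p')).
  fold spB in HP. destruct HP as [_ [P1 P2]]. rewrite Hlen in P1, P2.
  destruct b.
  - try rewrite E2 in Hin, Hinq. rewrite Hlen in Hin, Hinq. specialize (P2 z x Hinq Hin). lra.
  - try rewrite E1 in Hin, Hinq. rewrite Hlen in Hin, Hinq. specialize (P1 z x Hinq Hin). lra.
Qed.

Lemma caseB_result : exists g : R -> R, (forall x, continuity_pt g x) /\ (exists a b, g a <> g b) /\
  Darboux (fun x => F x + g x).
Proof.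
  assert (Gc := glim_cont 0 1 spB Hl0B HspB). fold G in Gc.
  exists G. split; [|split].
  - intros x. apply cont_of. apply Gc.
  - exists (-1), 1. unfold G. rewrite glim_left, glim_right; [lra|lra|lra].
  - apply IVP_Darboux.
    assert (Hcl := C_closed 0 1 spB Hl0B HspB). fold C in Hcl.
    apply (lemB (fun x => F x + G x) C); auto.
    + apply gap_of_const; auto. intros u v Huv Hf. unfold G. rewrite (glim_const 0 1 spB Hl0B HspB u v Huv Hf). auto.
    + intros x Cx e He.
      destruct (atan_close (F x) (e / 2) ltac:(lra)) as [dt [Hdt Hdt']].
      destruct (phi_contC x Cx dt Hdt) as [d1 [Hd1 Hd1']].
      destruct (Gc x (e / 2) ltac:(lra)) as [d2 [Hd2 Hd2']].
      exists (Rmin d1 d2). split; [unfold Rmin; destruct Rle_dec; lra|].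
      intros z Cz Hz.
      assert (A1 : Rabs (z - x) < d1) by (unfold Rmin in Hz; destruct Rle_dec; lra).
      assert (A2 : Rabs (z - x) < d2) by (unfold Rmin in Hz; destruct Rle_dec; lra).
      specialize (Hd1' z Cz A1). specialize (Hdt' _ Hd1'). specialize (Hd2' z A2).
      apply Rabs_def2 in Hdt'. apply Rabs_def2 in Hd2'. apply Rabs_def1; lra.
Qed.

End CaseB.

Theorem mainTheorem1 (F : R -> R) :
  Darboux F ->
  exists g : R -> R,
    (forall x : R, continuity_pt g x) /\
    (exists a b : R, g a <> g b) /\
    Darboux (fun x => F x + g x).
Proof.
  intros HD. assert (HF := Darboux_IVP F HD).
  destruct (classic (Aprop (fun x => atan (F x)))) as [HA|HnA].
  - destruct HA as [k1 [k2 [w1 [w2 [Hk [Hw HA]]]]]].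
    apply (caseA_result F HF k1 k2 w1 w2 Hk Hw HA).
  - apply (caseB_result F HF).
    apply (notA_B _ (PI / 2)); auto.
    intros x. assert (H := atan_bound (F x)). lra.
Qed.
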